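(* Let $\bm H$ be a finite-dimensional Hilbert space, $\rho_{\rm i}$ a density operator on $\bm H$, $U$ a unitary on $\bm H$, and $\rho':=U\rho_{\rm i}U^\dagger$. Let $\{M_b\}_{b\in B}\subset L(\bm H)$ with $B$ finite and $\sum_b M_b^\dagger M_b=I$; put $E_b:=M_b^\dagger M_b$, $p(b):=\mathrm{tr}[E_b\rho']$, and for $p(b)>0$, $\rho'(b):=M_b\rho' M_b^\dagger/p(b)$. Let $I_{\rm QC}:=S(\rho')-\sum_b p(b)S(\rho'(b))$. For each $b$ let $U_b$ be a unitary on $\bm H$, $\rho_{\rm f}(b):=U_b\rho'(b)U_b^\dagger$, and let $\rho_0(b)$ be a density operator on $\bm H$. Then (all sums over $b$ with $p(b)>0$) $$-\sum_b p(b)\,\mathrm{tr}[\rho_{\rm f}(b)\ln\rho_0(b)]-S(\rho_{\rm i})=\sum_b p(b)\,S(\rho_{\rm f}(b)\|\rho_0(b))-I_{\rm QC},$$ and consequently $$-\sum_b p(b)\,\mathrm{tr}[\rho_{\rm f}(b)\ln\rho_0(b)]-S(\rho_{\rm i})\ge -I_{\rm QC}.$$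
   Context: $S(\rho):=-\mathrm{tr}[\rho\ln\rho]$ is the von Neumann entropy. The quantum relative entropy is $S(\rho\|\sigma):=\mathrm{tr}[\rho\ln\rho]-\mathrm{tr}[\rho\ln\sigma]$, set to $+\infty$ if there is $|\psi\rangle$ with $\sigma|\psi\rangle=0$ and $\langle\psi|\rho|\psi\rangle\ne0$; correspondingly $-\mathrm{tr}[\rho\ln\sigma]$ is $+\infty$ in that case and otherwise computed on the support of $\sigma$; $0\ln0=0$. *)

(* Defs.v *)
From HB Require Import structures.
From mathcomp Require Import all_boot all_order all_algebra.
From mathcomp Require Import sesquilinear spectral.
From mathcomp Require Import complex.
From mathcomp Require Import boolp reals constructive_ereal exp.
Set Implicit Arguments. Unset Strict Implicit. Unset Printing Implicit Defensive.
Import Order.TTheory GRing.Theory Num.Theory.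
Local Open Scope ring_scope.
Local Open Scope sesquilinear_scope.
Local Open Scope complex_scope.

Section Quantum.
Variable R : realType.
Local Notation C := R[i].
Variable n : nat.

(* Vectors of the Hilbert space C^n are column vectors 'cV_n;
   <v|A|v> = (v^t* *m A *m v) 0 0. *)

Definition density (rho : 'M[C]_n) : Prop :=
  [/\ rho \is hermsymmx,
      forall v : 'cV[C]_n, 0 <= (v^t* *m rho *m v) 0 0
    & \tr rho = 1].

Definition ln_supp (x : C) : C := if x == 0 then 0 else (ln (complex.Re x))%:C.

(* matrix logarithm of a normal (here: PSD) matrix via its spectral
   decomposition A = P^-1 diag(d) P, computed on the support of A *)
Definition lnmx (A : 'M[C]_n) : 'M[C]_n :=
  invmx (spectralmx A) *m diag_mx (map_mx ln_supp (spectral_diag A))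
    *m spectralmx A.

(* von Neumann entropy  S(rho) = - tr[rho ln rho]  (0 ln 0 = 0) *)
Definition vN_entropy (rho : 'M[C]_n) : R := - complex.Re (\tr (rho *m lnmx rho)).

Definition neg_tr_log (rho sigma : 'M[C]_n) : \bar R :=
  if `[< exists v : 'cV[C]_n, sigma *m v = 0 /\ (v^t* *m rho *m v) 0 0 <> 0 >]
  then +oo%E
  else (- complex.Re (\tr (rho *m lnmx sigma)))%:E.

Definition rel_entropy (rho sigma : 'M[C]_n) : \bar R :=
  ((- vN_entropy rho)%:E + neg_tr_log rho sigma)%E.

Variable B : finType.
Variable M : B -> 'M[C]_n.

Definition meas_prob (rho : 'M[C]_n) (b : B) : R :=
  complex.Re (\tr ((M b)^t* *m M b *m rho)).

Definition post_state (rho : 'M[C]_n) (b : B) : 'M[C]_n :=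
  ((meas_prob rho b)^-1)%:C *: (M b *m rho *m (M b)^t*).

Definition I_QC (rho : 'M[C]_n) : R :=
  vN_entropy rho
  - \sum_(b | 0 < meas_prob rho b) meas_prob rho b * vN_entropy (post_state rho b).

End Quantum.

(* Main.v *)
Require Import Defs.
From HB Require Import structures.
From mathcomp Require Import all_boot all_order all_algebra.
From mathcomp Require Import sesquilinear spectral.
From mathcomp Require Import complex.
From mathcomp Require Import boolp reals constructive_ereal exp.
From mathcomp Require Import ring lra.
Set Implicit Arguments. Unset Strict Implicit. Unset Printing Implicit Defensive.
Import Order.TTheory GRing.Theory Num.Theory.
Local Open Scope ring_scope.
Local Open Scope sesquilinear_scope.
Local Open Scope complex_scope.


Section Q.
Variable R : realType.
Local Notation C := R[i].
Variable n : nat.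

Lemma ctM m p q (A : 'M[C]_(m,p)) (B : 'M[C]_(p,q)) : (A *m B)^t* = B^t* *m A^t*.
Proof. by rewrite trmx_mul map_mxM. Qed.

Lemma hermP (A : 'M[C]_n) : reflect (A^t* = A) (A \is hermsymmx).
Proof.
rewrite qualifE expr0 scale1r; apply: (iffP eqP) => [<-|->] //.
Qed.

Lemma ctE (A : 'M[C]_n) i j : A^t* i j = (A j i)^*.
Proof. by rewrite !mxE. Qed.

Definition wX (X : 'M[C]_n) i j := X i j * Num.conj (X i j).

Lemma wX_ge0 X i j : 0 <= wX X i j.
Proof. exact: mul_conjC_ge0. Qed.

Lemma wX_row X : X \is unitarymx -> forall i, \sum_j wX X i j = 1.
Proof.
move=> /unitarymxP XU i; have := congr1 (fun M : 'M[C]_n => M i i) XU.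
rewrite !mxE eqxx /= mulr1n => <-. apply: eq_bigr => j _; by rewrite !mxE.
Qed.

Lemma wX_col X : X \is unitarymx -> forall j, \sum_i wX X i j = 1.
Proof.
rewrite -trmxC_unitary => /unitarymxP XU j; have := congr1 (fun M : 'M[C]_n => M j j) XU.
rewrite !mxE eqxx /= mulr1n => <-; apply: eq_bigr => i _; rewrite !mxE /wX mulrC.
by rewrite conjCK.
Qed.

Lemma wX1 i j : wX 1%:M i j = (i == j)%:R.
Proof. by rewrite /wX !mxE; case: eqP => _; rewrite ?conjC1 ?conjC0 ?mulr1 ?mulr0. Qed.

Lemma trace4 (a b : 'rV[C]_n) X :
  \tr (diag_mx a *m X *m diag_mx b *m X^t*) =
  \sum_i \sum_j a 0 i * b 0 j * wX X i j.
Proof.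
rewrite /mxtrace; apply: eq_bigr => i _; rewrite mxE; apply: eq_bigr => j _.
rewrite mul_mx_diag mul_diag_mx !mxE /wX.
by rewrite -!mulrA; congr (_ * _); rewrite mulrCA.
Qed.

Lemma quad_diag (a : 'rV[C]_n) X j :
  (X^t* *m diag_mx a *m X) j j = \sum_i a 0 i * wX X i j.
Proof.
rewrite -mulmxA mxE; apply: eq_bigr => i _.
rewrite mul_diag_mx !mxE /wX.
by rewrite mulrCA [X i j * _]mulrC.
Qed.

Lemma tr_spec P Q (a b : 'rV[C]_n) : P \is unitarymx -> Q \is unitarymx ->
  \tr ((invmx P *m diag_mx a *m P) *m (invmx Q *m diag_mx b *m Q)) =
  \sum_i \sum_j a 0 i * b 0 j * wX (P *m Q^t*) i j.
Proof.
move=> PU QU; rewrite !invmx_unitary // -trace4.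
have -> : P^t* *m diag_mx a *m P *m (Q^t* *m diag_mx b *m Q) =
  P^t* *m (diag_mx a *m P *m Q^t* *m diag_mx b *m Q) by rewrite !mulmxA.
rewrite (mxtrace_mulC (P^t*)) ctM trmxCK !mulmxA.
by [].
Qed.

Lemma ctU (Q : 'M[C]_n) : Q \is unitarymx -> Q^t* \is unitarymx.
Proof. by rewrite trmxC_unitary. Qed.

Lemma delta_quad (M : 'M[C]_n) j :
  ((delta_mx 0 j : 'rV[C]_n) *m M *m (delta_mx j 0 : 'cV[C]_n)) 0 0 = M j j.
Proof. by rewrite -rowE -colE !mxE. Qed.

Lemma delta_ct j : (delta_mx j 0 : 'cV[C]_n)^t* = delta_mx 0 j.
Proof.
apply/matrixP => k l; rewrite !mxE.
by rewrite andbC rmorph_nat.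
Qed.

Lemma quad_spec P Q (a : 'rV[C]_n) j : P \is unitarymx -> Q \is unitarymx ->
  let v := Q^t* *m (delta_mx j 0 : 'cV[C]_n) in
  (v^t* *m (invmx P *m diag_mx a *m P) *m v) 0 0 =
  \sum_i a 0 i * wX (P *m Q^t*) i j.
Proof.
move=> PU QU v; rewrite /v ctM trmxCK delta_ct invmx_unitary //.
rewrite -quad_diag -delta_quad ctM trmxCK !mulmxA.
by [].
Qed.

Lemma spec_eq (A : 'M[C]_n) : A \is normalmx ->
  A = invmx (spectralmx A) *m diag_mx (spectral_diag A) *m spectralmx A.
Proof. by move/orthomx_spectralP. Qed.

Lemma tr_lnmx (A : 'M[C]_n) : A \is normalmx ->
  \tr (A *m lnmx A) =
  \sum_i spectral_diag A 0 i * ln_supp (spectral_diag A 0 i).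
Proof.
move=> AN; rewrite {1}(spec_eq AN) /lnmx tr_spec ?spectral_unitarymx //.
rewrite (unitarymxP (spectral_unitarymx A)).
apply: eq_bigr => i _; rewrite (bigD1 i) //= big1 => [|j ji].
  by rewrite wX1 eqxx mulr1 addr0 mxE.
by rewrite wX1 eq_sym (negPf ji) mulr0.
Qed.

Lemma sum_inv P Q (a b : 'rV[C]_n) (f : C -> C) :
  P \is unitarymx -> Q \is unitarymx ->
  invmx P *m diag_mx a *m P = invmx Q *m diag_mx b *m Q ->
  \sum_i f (a 0 i) = \sum_j f (b 0 j).
Proof.
move=> PU QU; rewrite !invmx_unitary // => E.
set X := P *m Q^t*.
have DX : diag_mx a *m X = X *m diag_mx b.
  have h1 : P *m (P^t* *m diag_mx a *m P) *m Q^t* = diag_mx a *m X.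
    by rewrite /X !mulmxA (unitarymxP PU) mul1mx.
  by rewrite -h1 E /X !mulmxA mulmxtVK.
have key i j : a 0 i * X i j = X i j * b 0 j.
  have := congr1 (fun M : 'M[C]_n => M i j) DX.
  by rewrite mul_diag_mx mul_mx_diag !mxE.
have XU : X \is unitarymx := mul_unitarymx PU (ctU QU).
transitivity (\sum_i \sum_j wX X i j * f (a 0 i)).
  by apply: eq_bigr => i _; rewrite -mulr_suml wX_row // mul1r.
transitivity (\sum_i \sum_j wX X i j * f (b 0 j)).
  apply: eq_bigr => i _; apply: eq_bigr => j _.
  have [X0|Xn0] := eqVneq (X i j) 0; first by rewrite /wX X0 !mul0r.
  by have := key i j; rewrite mulrC => /(mulfI Xn0) ->.
rewrite exchange_big; apply: eq_bigr => j _; rewrite -mulr_suml wX_col // mul1r.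
by [].
Qed.

End Q.


Section Q.
Variable R : realType.
Local Notation C := R[i].
Variable n : nat.

Lemma vN_unitary (A V : 'M[C]_n) : A \is normalmx -> V \is unitarymx ->
  vN_entropy (V *m A *m V^t*) = vN_entropy A.
Proof.
move=> AN VU.
have PU : spectralmx A \is unitarymx := spectral_unitarymx A.
have QU : spectralmx A *m V^t* \is unitarymx := mul_unitarymx PU (ctU VU).
have E : V *m A *m V^t* =
   invmx (spectralmx A *m V^t*) *m diag_mx (spectral_diag A) *m (spectralmx A *m V^t*).
  by rewrite (invmx_unitary QU) ctM trmxCK {1}(spec_eq AN) (invmx_unitary PU) !mulmxA.
have BN : V *m A *m V^t* \is normalmx.
  by apply/orthomx_spectral_subproof; exists (spectralmx A *m V^t*, spectral_diag A).
rewrite /vN_entropy (tr_lnmx AN) (tr_lnmx BN); congr (- complex.Re _).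
have E2 := etrans (esym (spec_eq BN)) E.
exact: (@sum_inv R n _ _ _ _ (fun x => x * ln_supp x) (spectral_unitarymx _) QU E2).
Qed.

End Q.


Section Q.
Variable R : realType.
Local Notation C := R[i].
Variable n : nat.
Definition lnR (x : R) : R := if x == 0 then 0 else ln x.

Lemma ln_suppC (x : R) : ln_supp (x%:C) = (lnR x)%:C.
Proof.
rewrite /ln_supp /lnR; have [->|x0] := eqVneq x 0; first by rewrite eqxx.
have -> : (x%:C == 0) = false.
  by apply/negbTE; apply: contra x0 => /eqP [] ->.
by [].
Qed.

Lemma term_ineq (a b c : R) : 0 <= a -> 0 <= b -> 0 <= c ->
  (b = 0 -> a * c = 0) -> c * (a - b) <= c * a * (lnR a - lnR b).
Proof.
move=> a0 b0 c0 hb.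
have [->|cn0] := eqVneq c 0; first by rewrite !mul0r.
have [->|an0] := eqVneq a 0; first by rewrite mulr0 mul0r sub0r mulrN oppr_le0 mulr_ge0.
have [b00|bn0] := eqVneq b 0.
  by move: (hb b00) => /eqP; rewrite mulf_eq0 (negPf an0) (negPf cn0).
have ap : 0 < a by rewrite lt_def an0.
have bp : 0 < b by rewrite lt_def bn0.
have cp : 0 < c by rewrite lt_def cn0.
rewrite /lnR (negPf an0) (negPf bn0) -mulrA ler_pM2l //.
have h : ln (b / a) <= b / a - 1.
  have := @le_ln1Dx R (b / a - 1); rewrite [1 + _]addrC subrK; apply.
  by rewrite ltrBrDr addrC subrr divr_gt0.
rewrite ln_div ?posrE // in h.
have h2 : a * (ln b - ln a) <= a * (b / a - 1) by rewrite ler_pM2l.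
have h3 : a * (b / a) = b by rewrite mulrCA divff ?mulr1 // gt_eqF.
rewrite [a * (b / a - 1)]mulrBr mulr1 h3 in h2.
move: h2; rewrite !mulrBr; lra.
Qed.

Lemma ge0_C (x : C) : 0 <= x -> x = (complex.Re x)%:C.
Proof. by move=> x0; rewrite RRe_real // ger0_real. Qed.

Lemma klein_core (r s : 'I_n -> C) (w : 'I_n -> 'I_n -> C) :
 (forall i, 0 <= r i) -> (forall j, 0 <= s j) -> (forall i j, 0 <= w i j) ->
 (forall i, \sum_j w i j = 1) -> (forall j, \sum_i w i j = 1) ->
 \sum_i r i = \sum_j s j ->
 (forall i j, s j = 0 -> r i * w i j = 0) ->
 0 <= \sum_i r i * ln_supp (r i) - \sum_i \sum_j r i * ln_supp (s j) * w i j.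
Proof.
move=> r0 s0 w0 wr wc rs hz.
have e1 : \sum_i r i * ln_supp (r i) = \sum_i \sum_j r i * ln_supp (r i) * w i j.
  by apply: eq_bigr => i _; rewrite -mulr_sumr wr mulr1.
have e0 : \sum_i \sum_j w i j * (r i - s j) = 0.
  have -> : \sum_i \sum_j w i j * (r i - s j) =
     \sum_i \sum_j w i j * r i - \sum_i \sum_j w i j * s j.
    rewrite -sumrB; apply: eq_bigr => i _; rewrite -sumrB.
    by apply: eq_bigr => j _; rewrite mulrBr.
  rewrite [X in _ - X]exchange_big /=.
  have -> : \sum_i \sum_j w i j * r i = \sum_i r i.
    by apply: eq_bigr => i _; rewrite -mulr_suml wr mul1r.
  have -> : \sum_j \sum_i w i j * s j = \sum_j s j.
    by apply: eq_bigr => j _; rewrite -mulr_suml wc mul1r.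
  by rewrite rs subrr.
rewrite e1 -sumrB -[X in X <= _]e0. apply: ler_sum => i _; rewrite -sumrB; apply: ler_sum => j _.
have hz' := hz i j.
move: (r0 i) (s0 j) (w0 i j) hz'.
rewrite (ge0_C (r0 i)) (ge0_C (s0 j)) (ge0_C (w0 i j)) !ln_suppC.
set a := complex.Re (r i); set b := complex.Re (s j); set c := complex.Re (w i j).
move=> a0 b0 c0 h.
have -> : c%:C * (a%:C - b%:C) = (c * (a - b))%:C by ring.
have -> : a%:C * (lnR a)%:C * c%:C - a%:C * (lnR b)%:C * c%:C =
   (c * a * (lnR a - lnR b))%:C by ring.
rewrite lecR; rewrite !lecR in a0 b0 c0.
apply: term_ineq => // b00.
by move: (h (congr1 _ b00)); rewrite -rmorphM => -[].
Qed.

Lemma sum_delta (F : 'I_n -> C) i : \sum_k F k * (k == i)%:R = F i.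
Proof.
rewrite (bigD1 i) //= eqxx mulr1 big1 ?addr0 // => k ki.
by rewrite (negPf ki) mulr0.
Qed.

Lemma eig_ge0 (A : 'M[C]_n) : density A -> forall i, 0 <= spectral_diag A 0 i.
Proof.
case=> Ah Apsd _ i; have AN := hermitian_normalmx Ah.
have E := spec_eq AN.
have PU := spectral_unitarymx A.
set P := spectralmx A in E PU *; set d := spectral_diag A in E *.
have := Apsd (P^t* *m delta_mx i 0); rewrite {1}E quad_spec //.
rewrite (unitarymxP PU).
by under eq_bigr do rewrite wX1; rewrite sum_delta.
Qed.

Lemma eig_sum (A : 'M[C]_n) : density A -> \sum_i spectral_diag A 0 i = 1.
Proof.
case=> Ah _ Atr; have AN := hermitian_normalmx Ah.
have E := spec_eq AN.
have PU := spectral_unitarymx A.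
set P := spectralmx A in E PU *; set d := spectral_diag A in E *.
rewrite -mxtrace_diag -Atr {1}E (invmx_unitary PU) -mulmxA (mxtrace_mulC (P^t*)).
by rewrite -mulmxA (unitarymxP PU) mulmx1.
Qed.

Lemma klein (rho sigma : 'M[C]_n) : density rho -> density sigma ->
  (0 <= rel_entropy rho sigma)%E.
Proof.
move=> dr ds.
have rN := hermitian_normalmx (let: And3 h _ _ := dr in h).
have sN := hermitian_normalmx (let: And3 h _ _ := ds in h).
rewrite /rel_entropy /neg_tr_log.
case: asboolP => [_|nex]; first by rewrite addey ?leey.
rewrite -EFinD lee_fin /vN_entropy opprK (tr_lnmx rN).
have r0 := eig_ge0 dr; have s0 := eig_ge0 ds.
have rs1 := eig_sum dr; have ss1 := eig_sum ds.
have Er := spec_eq rN; have Es := spec_eq sN.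
have PU := spectral_unitarymx rho; have QU := spectral_unitarymx sigma.
rewrite /lnmx.
set P := spectralmx rho in Er PU *; set r := spectral_diag rho in Er r0 rs1 *.
set Q := spectralmx sigma in Es QU *; set s := spectral_diag sigma in Es s0 ss1 *.
rewrite [X in \tr (X *m _)]Er (tr_spec _ _ PU QU).
have XU : P *m Q^t* \is unitarymx := mul_unitarymx PU (ctU QU).
have hz : forall i j, s 0 j = 0 -> r 0 i * wX (P *m Q^t*) i j = 0.
  move=> i j sj0.
  have qv := quad_spec r j PU QU; rewrite -Er in qv.
  have sv : sigma *m (Q^t* *m (delta_mx j 0 : 'cV[C]_n)) = 0.
    rewrite [X in X *m _]Es.
    have -> : invmx Q *m diag_mx s *m Q *m (Q^t* *m (delta_mx j 0 : 'cV[C]_n)) =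
      Q^t* *m (diag_mx s *m delta_mx j 0).
      by rewrite (invmx_unitary QU) -!mulmxA (mulmxA Q) (unitarymxP QU) mul1mx.
    have -> : diag_mx s *m (delta_mx j 0 : 'cV[C]_n) = 0.
      apply/matrixP => k l; rewrite mul_diag_mx !mxE.
      by case: eqP => [->|_]; rewrite ?sj0 ?mul0r ?mulr0.
    by rewrite mulmx0.
  have qz : (\sum_i0 r 0 i0 * wX (P *m Q^t*) i0 j) = 0.
    rewrite -qv; apply: contra_notP nex => h.
    by exists (Q^t* *m (delta_mx j 0 : 'cV[C]_n)); split.
  move/psumr_eq0P: qz => -> // k _.
  by rewrite mulr_ge0 // wX_ge0.
have := @klein_core (fun i => r 0 i) (fun j => s 0 j) (wX (P *m Q^t*)) r0 s0
   (fun i j => wX_ge0 _ i j) (wX_row XU) (wX_col XU) (etrans rs1 (esym ss1)) hz.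
have e : \sum_i \sum_j r 0 i * (map_mx (@ln_supp R) s) 0 j * wX (P *m Q^t*) i j =
   \sum_i \sum_j r 0 i * ln_supp (s 0 j) * wX (P *m Q^t*) i j.
  by apply: eq_bigr => i _; apply: eq_bigr => j _; rewrite mxE.
rewrite e.
move: (\sum_i _) (\sum_i _) => x y.
case: x => x1 x2; case: y => y1 y2; rewrite lecE => /andP[_]. exact.
Qed.
End Q.


Section Q.
Variable R : realType.
Local Notation C := R[i].
Variable n : nat.

Definition psd (A : 'M[C]_n) := forall v : 'cV[C]_n, 0 <= (v^t* *m A *m v) 0 0.

Lemma herm_conj (G A : 'M[C]_n) : A^t* = A -> (G *m A *m G^t*)^t* = G *m A *m G^t*.
Proof. by move=> hA; rewrite !ctM trmxCK hA mulmxA. Qed.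

Lemma psd_conj (G A : 'M[C]_n) : psd A -> psd (G *m A *m G^t*).
Proof.
move=> hA v; have := hA (G^t* *m v).
by rewrite ctM trmxCK !mulmxA.
Qed.

Lemma ctZ (k : C) (A : 'M[C]_n) : (k *: A)^t* = Num.conj k *: A^t*.
Proof. by apply/matrixP => i j; rewrite !mxE rmorphM. Qed.

Lemma psd_scale (k : C) (A : 'M[C]_n) : 0 <= k -> psd A -> psd (k *: A).
Proof.
move=> k0 hA v; rewrite -scalemxAr -scalemxAl mxE.
by rewrite mulr_ge0.
Qed.

Lemma tr_conj (G A : 'M[C]_n) : G \is unitarymx -> \tr (G *m A *m G^t*) = \tr A.
Proof.
move=> GU; rewrite (mxtrace_mulC (G *m A)) mulmxA.
have := unitarymxP (ctU GU); rewrite trmxCK => ->.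
by rewrite mul1mx.
Qed.

Lemma tr_psd (A : 'M[C]_n) : psd A -> 0 <= \tr A.
Proof.
move=> hA; rewrite /mxtrace; apply: sumr_ge0 => j _.
have := hA (delta_mx j 0); rewrite delta_ct.
by rewrite delta_quad.
Qed.

Lemma herm_normal (A : 'M[C]_n) : A^t* = A -> A \is normalmx.
Proof. by move=> h; apply: hermitian_normalmx; apply/hermP. Qed.

End Q.


Lemma density_post (R : realType) (n : nat) (B : finType) (M : B -> 'M[R[i]]_n)
  (rho : 'M[R[i]]_n) b :
  rho^t* = rho -> psd rho -> 0 < meas_prob M rho b -> density (post_state M rho b).
Proof.
move=> hr pr pb.
set c := (meas_prob M rho b)^-1.
have c0 : 0 <= c by rewrite invr_ge0 ltW.
split.
- apply/hermP; rewrite /post_state ctZ herm_conj // conj_Creal //.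
  by apply/complex_realP; exists c.
- by apply: psd_scale; [rewrite lecR | exact: psd_conj].
- rewrite /post_state mxtraceZ.
  have -> : \tr (M b *m rho *m (M b)^t*) = \tr ((M b)^t* *m M b *m rho).
    by rewrite mxtrace_mulC mulmxA.
  have t0 : 0 <= \tr ((M b)^t* *m M b *m rho).
    rewrite -mulmxA mxtrace_mulC; apply: tr_psd; exact: psd_conj.
  rewrite (ge0_C t0) -rmorphM /c /meas_prob mulVf ?gt_eqF //.
Qed.

Lemma density_conj (R : realType) (n : nat) (G A : 'M[R[i]]_n) :
  G \is unitarymx -> density A -> density (G *m A *m G^t*).
Proof.
move=> GU [hA pA tA]; split.
- by apply/hermP; apply: herm_conj; apply/hermP.
- exact: psd_conj.
- by rewrite tr_conj.
Qed.


Unset Implicit Arguments.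


Theorem theorem6p1 (R : realType) (n : nat) (B : finType)
  (rho_i U : 'M[R[i]]_n) (M Ub rho0 : B -> 'M[R[i]]_n) :
  density rho_i ->
  U \is unitarymx ->
  \sum_(b : B) (M b)^t* *m M b = 1%:M ->
  (forall b, Ub b \is unitarymx) ->
  (forall b, density (rho0 b)) ->
  let rho' := U *m rho_i *m U^t* in
  let p := meas_prob M rho' in
  let rho_f := fun b => Ub b *m post_state M rho' b *m (Ub b)^t* in
  let LHS := (\sum_(b | (0 < p b)%R) (p b)%:E * neg_tr_log (rho_f b) (rho0 b)
              - (vN_entropy rho_i)%:E)%E in
  (LHS = \sum_(b | (0 < p b)%R) (p b)%:E * rel_entropy (rho_f b) (rho0 b)
           - (I_QC M rho')%:E)%E
  /\ (- (I_QC M rho')%:E <= LHS)%E.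
Proof.
move=> dI UU _ UbU d0 rho' p rho_f LHS.
have [hI psdI trI] := dI.
have hIe : rho_i^t* = rho_i by apply/hermP.
have h' : rho'^t* = rho' by apply: herm_conj.
have psd' : psd rho' by apply: psd_conj.
have vI : vN_entropy rho' = vN_entropy rho_i := vN_unitary (herm_normal hIe) UU.
have dP : forall b, (0 < p b)%R -> density (post_state M rho' b).
  by move=> b pb; apply: density_post.
have dF : forall b, (0 < p b)%R -> density (rho_f b).
  by move=> b pb; exact: (density_conj (UbU b) (dP b pb)).
have vF : forall b, (0 < p b)%R ->
    vN_entropy (rho_f b) = vN_entropy (post_state M rho' b).
  move=> b pb; have [hP _ _] := dP b pb.
  exact: (vN_unitary (hermitian_normalmx hP) (UbU b)).
have step : forall b, (0 < p b)%R ->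
   ((p b)%:E * rel_entropy (rho_f b) (rho0 b) =
    (- (p b * vN_entropy (post_state M rho' b)))%:E
      + (p b)%:E * neg_tr_log (rho_f b) (rho0 b))%E.
  move=> b pb; rewrite /rel_entropy (vF b pb) /neg_tr_log.
  case: ifP => _.
    have h1 : forall x : R, (x%:E + +oo = +oo)%E by [].
    have pbE : (0 < (p b)%:E)%E by rewrite lte_fin.
    by rewrite !h1 (gt0_muley pbE).
  by rewrite -EFinD -!EFinM -EFinD mulrDr mulrN.
have eq1 : LHS = (\sum_(b | (0 < p b)%R) (p b)%:E * rel_entropy (rho_f b) (rho0 b)
           - (I_QC M rho')%:E)%E.
  rewrite (eq_bigr _ step) big_split /= sumEFin /LHS /I_QC vI sumrN.
  set T := (\sum_(b | _) _ * neg_tr_log _ _)%E.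
  set s := (\sum_(b | _) _ * vN_entropy _)%R.
  rewrite [((- s)%:E + T)%E]addeC -addeA; congr (T + _)%E.
  by rewrite -!EFinN -EFinD; congr EFin; lra.
split; first exact: eq1.
rewrite eq1; apply: lee_paddl; last exact: lexx.
apply: sume_ge0 => b pb; apply: mule_ge0; first by rewrite lee_fin ltW.
by apply: klein; [exact: dF | exact: d0].
Qed.
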